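(* Let $(R,\mathfrak m)$ be a Noetherian local ring, $X$ a finitely generated $R$-module, $N$ a Burch submodule of $X$, $t\ge1$ an integer, and $M$ a finitely generated $R$-module such that either (1) $\operatorname{Tor}_t^R(M,N)=\operatorname{Tor}_{t-1}^R(M,N)=0$, or (2) $\operatorname{Ext}^{t+1}_R(M,N)=\operatorname{Ext}^t_R(M,N)=0$. Then $\operatorname{pd}_R M<t$.
   Context: $\operatorname{Tor}_0^R(M,N)=M\otimes_RN$. For a submodule $N\subseteq X$, $(N:_X\mathfrak m)=\{x\in X:\mathfrak m x\subseteq N\}$. $N$ is a Burch submodule of $X$ if $\mathfrak m(N:_X\mathfrak m)\neq\mathfrak m N$. The projective dimension of the zero module is $-\infty$. *)

(* Defs.v *)
From HB Require Import structures.
From mathcomp Require Import all_boot all_order all_algebra.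
Set Implicit Arguments. Unset Strict Implicit. Unset Printing Implicit Defensive.
Import GRing.Theory.
Local Open Scope ring_scope.

Section CommAlg.
Variable R : comNzRingType.

Definition is_ideal (I : R -> Prop) : Prop :=
  I 0 /\ (forall x y, I x -> I y -> I (x + y)) /\ (forall r x, I x -> I (r * x)).

Definition proper_ideal (I : R -> Prop) : Prop := is_ideal I /\ ~ I 1.

Definition local_max_ideal (m : R -> Prop) : Prop :=
  proper_ideal m /\ forall I, proper_ideal I -> forall x, I x -> m x.

Definition noetherian : Prop :=
  forall I, is_ideal I -> exists n (g : 'I_n -> R), (forall i, I (g i)) /\
    forall x, I x -> exists c : 'I_n -> R, x = \sum_(i < n) c i * g i.

Variable M : lmodType R.

Definition fin_gen : Prop :=
  exists n (g : 'I_n -> M), forall x, exists c : 'I_n -> R,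
    x = \sum_(i < n) c i *: g i.

Definition submodule (N : M -> Prop) : Prop :=
  N 0 /\ (forall x y, N x -> N y -> N (x + y)) /\ (forall r x, N x -> N (r *: x)).

Definition colon (N : M -> Prop) (m : R -> Prop) : M -> Prop :=
  fun x => forall r, m r -> N (r *: x).

Definition ideal_mul (I : R -> Prop) (P : M -> Prop) : M -> Prop :=
  fun y => exists n (r : 'I_n -> R) (x : 'I_n -> M),
    (forall i, I (r i) /\ P (x i)) /\ y = \sum_(i < n) r i *: x i.

(* N is a Burch submodule of X (= M here): m (N :_X m) <> m N *)
Definition burch (m : R -> Prop) (N : M -> Prop) : Prop :=
  ~ (forall y, ideal_mul m (colon N m) y <-> ideal_mul m N y).

End CommAlg.

(* A free resolution  ... -> F_2 -d_1-> F_1 -d_0-> F_0 -eps-> M -> 0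
   with F_i = R^(b i) (row vectors), d_i : F_(i+1) -> F_i given by right
   multiplication with a b(i+1) x b(i) matrix, eps (x) = sum_j x_j g_j. *)
Record free_res (R : comNzRingType) (M : lmodType R) := FreeRes {
  fr_b : nat -> nat;
  fr_d : forall i, 'M[R]_(fr_b i.+1, fr_b i);
  fr_g : 'I_(fr_b 0) -> M }.
Arguments fr_b {R M} f i : rename.
Arguments fr_d {R M} f i : rename.
Arguments fr_g {R M} f _ : rename.

Unset Implicit Arguments.
Section Res.
Variables (R : comNzRingType) (M : lmodType R).
Implicit Type F : free_res M.

Definition fr_eps F (x : 'rV[R]_(fr_b F 0)) : M :=
  \sum_(j < fr_b F 0) x 0 j *: fr_g F j.

Definition is_free_res F : Prop :=
  (forall y : M, exists x, fr_eps F x = y) /\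
  (forall x, fr_eps F x = 0 <-> exists y, x = y *m fr_d F 0) /\
  (forall i (x : 'rV[R]_(fr_b F i.+1)),
      x *m fr_d F i = 0 <-> exists y, x = y *m fr_d F i.+1).

(* pd_R M < t  (with pd 0 = -oo): M has a free resolution by finitely
   generated free modules F_i with F_i = 0 for i >= t. *)
Definition pd_lt (t : nat) : Prop :=
  exists F : free_res M, is_free_res F /\ forall i, (t <= i)%N -> fr_b F i = 0%N.

Variable X : lmodType R.

(* the map d_i (x) N : F_(i+1) (x) N -> F_i (x) N, with F_k (x) N = N^(b k) *)
Definition tor_map {m n} (A : 'M[R]_(m, n)) (v : 'I_m -> X) : 'I_n -> X :=
  fun j => \sum_(k < m) A k j *: v k.

(* the map Hom(d_i, N) : Hom(F_i, N) -> Hom(F_(i+1), N), Hom(F_k,N) = N^(b k) *)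
Definition hom_map {m n} (A : 'M[R]_(m, n)) (w : 'I_n -> X) : 'I_m -> X :=
  fun k => \sum_(j < n) A k j *: w j.

Definition inN (N : X -> Prop) {n} (v : 'I_n -> X) : Prop := forall k, N (v k).

Definition tor_cycle F (i : nat) : ('I_(fr_b F i) -> X) -> Prop :=
  match i return ('I_(fr_b F i) -> X) -> Prop with
  | 0 => fun _ => True
  | i'.+1 => fun v => forall j, tor_map (fr_d F i') v j = 0
  end.

(* Tor_i^R(M, N) = H_i(F (x) N) = 0 *)
Definition tor_zero F (N : X -> Prop) (i : nat) : Prop :=
  forall v : 'I_(fr_b F i) -> X, inN N v -> tor_cycle F i v ->
    exists u : 'I_(fr_b F i.+1) -> X, inN N u /\
      forall j, v j = tor_map (fr_d F i) u j.

Definition ext_cobound F (N : X -> Prop) (i : nat) : ('I_(fr_b F i) -> X) -> Prop :=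
  match i return ('I_(fr_b F i) -> X) -> Prop with
  | 0 => fun w => forall j, w j = 0
  | i'.+1 => fun w => exists u : 'I_(fr_b F i') -> X, inN N u /\
                        forall j, w j = hom_map (fr_d F i') u j
  end.

(* Ext^i_R(M, N) = H^i(Hom(F, N)) = 0 *)
Definition ext_zero F (N : X -> Prop) (i : nat) : Prop :=
  forall w : 'I_(fr_b F i) -> X, inN N w ->
    (forall k, hom_map (fr_d F i) w k = 0) -> ext_cobound F N i w.

End Res.

Arguments fr_eps {R M} F x.
Arguments is_free_res {R M} F.
Arguments pd_lt {R} M t.
Arguments tor_map {R X m n} A v _.
Arguments hom_map {R X m n} A w _.
Arguments inN {R X} N {n} v.
Arguments tor_cycle {R M X} F i _.
Arguments tor_zero {R M X} F N i.
Arguments ext_cobound {R M X} F N i _.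
Arguments ext_zero {R M X} F N i.

(* Main.v *)
Require Import Defs.
From HB Require Import structures.
From mathcomp Require Import all_boot all_order all_algebra.
From mathcomp Require Import zify ring.
From Stdlib Require Import Classical.
Set Implicit Arguments. Unset Strict Implicit. Unset Printing Implicit Defensive.
Import GRing.Theory.
Local Open Scope ring_scope.
Section Transfer.
Variables (R : comNzRingType) (M : lmodType R).

Lemma transfer (F F' : free_res M)
  (A : forall i, 'M[R]_(fr_b F' i, fr_b F i))
  (B : forall i, 'M[R]_(fr_b F i, fr_b F' i)) :
  is_free_res F ->
  (forall i, A i *m B i = 1%:M) ->
  (forall i, A i.+1 *m fr_d F i = fr_d F' i *m A i) ->
  (forall i, fr_d F i *m B i = B i.+1 *m fr_d F' i) ->
  (forall x, fr_eps F' x = fr_eps F (x *m A 0)) ->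
  (forall x, fr_eps F x = fr_eps F' (x *m B 0)) ->
  is_free_res F'.
Proof.
move=> [Hs [H0 Hi]] HAB HA HB He1 He2.
have inv i (x : 'rV_(fr_b F' i)) : x = x *m A i *m B i.
  by rewrite -mulmxA HAB mulmx1.
split; [|split].
- move=> y; have [x <-] := Hs y; exists (x *m B 0); by rewrite He2.
- move=> x; split.
  + rewrite He1 => /H0 [y Hy]; exists (y *m B 1%N).
    by rewrite (inv 0%N x) Hy -mulmxA HB mulmxA.
  + move=> [y ->]; rewrite He1 -mulmxA -HA mulmxA; apply/H0; by exists (y *m A 1%N).
- move=> i x; split.
  + move=> Hx.
    have : x *m A i.+1 *m fr_d F i = 0 by rewrite -mulmxA HA mulmxA Hx mul0mx.
    move/Hi => [y Hy]; exists (y *m B i.+2).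
    by rewrite (inv _ x) Hy -mulmxA HB mulmxA.
  + move=> [y ->].
    rewrite (inv _ (y *m fr_d F' i.+1 *m fr_d F' i)).
    rewrite -(mulmxA (y *m fr_d F' i.+1)) -HA mulmxA.
    rewrite -(mulmxA y) -HA mulmxA.
    have -> : y *m A i.+2 *m fr_d F i.+1 *m fr_d F i = 0.
      apply/Hi; by exists (y *m A i.+2).
    by rewrite !mul0mx.
Qed.
End Transfer.
Section Sums.
Variable R : comNzRingType.

Lemma sum_inj (V : nmodType) (m n : nat) (e : 'I_m -> 'I_n) (P : pred 'I_n) (f : 'I_n -> V) :
  injective e -> (forall k, P (e k)) -> (forall j, P j -> exists k, e k = j) ->
  \sum_(k < m) f (e k) = \sum_(j < n | P j) f j.
Proof.
move=> ei eP Pe.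
rewrite -(big_map e predT f) -[in RHS]big_filter.
apply: perm_big; apply: uniq_perm.
- rewrite map_inj_uniq //; exact: index_enum_uniq.
- apply: filter_uniq; exact: index_enum_uniq.
move=> j; rewrite mem_filter mem_index_enum andbT.
apply/mapP/idP.
- by move=> [k _ ->].
- by move=> /Pe [k <-]; exists k; rewrite ?mem_index_enum.
Qed.

Lemma sum_pick (n : nat) (P : pred 'I_n) (j : 'I_n) (g : 'I_n -> R) :
  \sum_(j' < n | P j') g j' * (j' == j)%:R = (P j)%:R * g j.
Proof.
case Pj: (P j).
- rewrite (bigD1 j) //= eqxx mulr1 big1 ?addr0 ?mul1r // => j' /andP [_ /negbTE ->].
  by rewrite mulr0.
- rewrite big1 ?mul0r // => j' Pj'; case: eqP => [E|]; last by rewrite mulr0.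
  by rewrite E Pj in Pj'.
Qed.

Lemma sum_pickl (n : nat) (j : 'I_n) (g : 'I_n -> R) :
  \sum_(j' < n) (j == j')%:R * g j' = g j.
Proof.
rewrite (eq_bigr (fun j' => g j' * (j' == j)%:R)); last by move=> j' _; rewrite eq_sym mulrC.
by rewrite sum_pick mul1r.
Qed.

Lemma sum_pickr (n : nat) (j : 'I_n) (g : 'I_n -> R) :
  \sum_(j' < n) g j' * (j' == j)%:R = g j.
Proof. by rewrite sum_pick mul1r. Qed.
End Sums.

Section Trunc.
Variables (R : comNzRingType) (M : lmodType R) (F : free_res M) (t : nat).
Hypothesis t_gt0 : (0 < t)%N.
Hypothesis bt0 : fr_b F t = 0%N.

Definition bT i := if (i < t)%N then fr_b F i else 0%N.
Lemma bT_le i : (bT i <= fr_b F i)%N.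
Proof. rewrite /bT; by case: ifP. Qed.
Definition embT i (k : 'I_(bT i)) : 'I_(fr_b F i) := widen_ord (bT_le i) k.
Lemma embT_inj i : injective (@embT i).
Proof. move=> k k' /(congr1 val) /= E; exact: val_inj. Qed.

Definition FT : free_res M :=
  @FreeRes R M bT (fun i => \matrix_(k, j) fr_d F i (embT k) (embT j))
    (fun k => fr_g F (embT k)).
Definition AT i : 'M[R]_(bT i, fr_b F i) := \matrix_(k, j) (embT k == j)%:R.
Definition BT i : 'M[R]_(fr_b F i, bT i) := \matrix_(j, k) (j == embT k)%:R.

Lemma embT_sum (V : nmodType) i (f : 'I_(fr_b F i) -> V) : (i < t)%N ->
  \sum_(k < bT i) f (embT k) = \sum_(j < fr_b F i) f j.
Proof.
move=> it; rewrite (sum_inj (P := predT)) //; first exact: embT_inj.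
move=> j _; have jl : (j < bT i)%N by rewrite /bT it.
by exists (Ordinal jl); apply: val_inj.
Qed.

Lemma FT_res : is_free_res F -> is_free_res FT /\ forall i, (t <= i)%N -> fr_b FT i = 0%N.
Proof.
move=> HF; split; last by move=> i ti; rewrite /= /bT ltnNge ti.
have Hi := HF.2.2.
apply: (@transfer _ _ F FT AT BT) => //.
- move=> i; apply/matrixP => k k'; rewrite !mxE.
  under eq_bigr do rewrite !mxE.
  by rewrite sum_pickl (inj_eq (@embT_inj i)).
- move=> i; apply/matrixP => k j; rewrite !mxE.
  under eq_bigr do rewrite !mxE.
  under [RHS]eq_bigr do rewrite !mxE.
  rewrite sum_pickl.
  case: (ltnP i t) => it.
  + rewrite (embT_sum (fun j' => fr_d F i (embT k) j' * (j' == j)%:R)) //.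
    by rewrite sum_pickr.
  + exfalso; have := ltn_ord k; move: (nat_of_ord k) => kn; rewrite /= /bT ifF ?ltn0 //.
    by apply/negbTE; rewrite -leqNgt (leq_trans it (leqnSn i)).
- move=> i; apply/matrixP => l k; rewrite !mxE.
  under eq_bigr do rewrite !mxE.
  under [RHS]eq_bigr do rewrite !mxE.
  rewrite sum_pickr.
  case: (ltnP i.+1 t) => it.
  + rewrite (embT_sum (fun j' => (l == j')%:R * fr_d F i j' (embT k))) //.
    by rewrite sum_pickl.
  + exfalso; have := ltn_ord k; move: (nat_of_ord k) => kn; rewrite /= /bT; case: ifP => [ilt _|]; last by rewrite ltn0.
    have ei : i.+1 = t by apply/eqP; rewrite eqn_leq it ilt.
    have := ltn_ord l; move: (nat_of_ord l) => ln; by rewrite ei bt0.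
- move=> x; rewrite /fr_eps /=.
  rewrite -(embT_sum (fun j => (x *m AT 0) 0 j *: fr_g F j)) //.
  apply: eq_bigr => k _.
  rewrite !mxE; congr (_ *: _).
  under eq_bigr do rewrite !mxE.
  by rewrite sum_pickr.
- move=> x; rewrite /fr_eps /=.
  rewrite -(embT_sum (fun j => x 0 j *: fr_g F j)) //.
  apply: eq_bigr => k _; rewrite !mxE; congr (_ *: _).
  under eq_bigr do rewrite !mxE.
  by rewrite sum_pickr.
Qed.
End Trunc.

Definition natent (R : comNzRingType) m n (A : 'M[R]_(m, n)) (r c : nat) : R :=
  \sum_(k < m) \sum_(j < n) ((val k == r) && (val j == c))%:R * A k j.

Section Natent.
Variable R : comNzRingType.
Lemma natentL m n (A : 'M[R]_(m, n)) r (j : 'I_n) :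
  natent A r j = \sum_(k < m) (val k == r)%:R * A k j.
Proof.
apply: eq_bigr => k _.
rewrite (eq_bigr (fun j' => ((val k == r)%:R * A k j') * (j' == j)%:R)).
  by rewrite sum_pickr.
move=> j' _; rewrite (inj_eq val_inj) -mulnb natrM; ring.
Qed.
Lemma natentR m n (A : 'M[R]_(m, n)) (k : 'I_m) c :
  natent A k c = \sum_(j < n) (val j == c)%:R * A k j.
Proof.
rewrite /natent (eq_bigr (fun k' => (k == k')%:R * \sum_(j < n) (val j == c)%:R * A k' j)).
  by rewrite sum_pickl.
move=> k' _; rewrite mulr_sumr; apply: eq_bigr => j _.
rewrite (inj_eq val_inj) [k' == k]eq_sym -mulnb natrM; ring.
Qed.
Lemma natentE m n (A : 'M[R]_(m, n)) (k : 'I_m) (j : 'I_n) :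
  natent A k j = A k j.
Proof.
rewrite natentR (eq_bigr (fun j' => A k j' * (j' == j)%:R)) ?sum_pickr //.
by move=> j' _; rewrite (inj_eq val_inj) mulrC.
Qed.
End Natent.

Section Cancel.
Variables (R : comNzRingType) (M : lmodType R) (F : free_res M).
Variables (i0 p q : nat) (v : R).
Local Notation b := (fr_b F).
Local Notation D := (fr_d F).
Hypothesis hp : (p < b i0.+1)%N.
Hypothesis hq : (q < b i0)%N.
Hypothesis hv : v * natent (D i0) p q = 1.

Definition dl i := (i == i0) || (i == i0.+1).
Definition sk i := if i == i0 then q else p.
Definition bC i := (b i - dl i)%N.

Lemma sk_lt i : dl i -> (sk i < b i)%N.
Proof.
rewrite /dl /sk; case: (eqVneq i i0) => [->|_] //= /eqP ->; done.
Qed.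

Lemma embC_lt i (k : 'I_(bC i)) : ((if dl i then bump (sk i) k else k) < b i)%N.
Proof.
have := ltn_ord k; move: (nat_of_ord k) => kn; rewrite /bC; case Hd: (dl i) => /=.
  have := sk_lt Hd; rewrite /bump; case: (sk i <= kn)%N => /=; lia.
lia.
Qed.

Definition embC i (k : 'I_(bC i)) : 'I_(b i) := Ordinal (embC_lt k).
Definition PC i : pred 'I_(b i) := fun j => ~~ (dl i && (val j == sk i)).
Arguments PC : clear implicits.

Lemma embC_inj i : injective (@embC i).
Proof.
move=> k k' /(congr1 val) /=; case: (dl i) => E; apply: val_inj => //.
by move/(can_inj (bumpK (sk i))): E.
Qed.
Lemma embC_P i k : PC i (@embC i k).
Proof. rewrite /PC /=; case: (dl i) => //=; by rewrite eq_sym neq_bump. Qed.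
Lemma embC_surj i j : PC i j -> exists k, @embC i k = j.
Proof.
rewrite /PC; case Hd: (dl i) => /= Hj.
- have lt : (unbump (sk i) j < bC i)%N.
    have := ltn_ord j; have := sk_lt Hd; move: Hj; rewrite /bC Hd /unbump /=.
    move: (nat_of_ord j) (sk i) => jn sn; move/eqP.
    case: (ltnP sn jn) => /= H1 H2 H3 H4; lia.
  exists (Ordinal lt); apply: val_inj; rewrite /= Hd unbumpKcond.
  by move/negbTE: Hj => ->.
- have lt : (j < bC i)%N by rewrite /bC Hd subn0.
  by exists (Ordinal lt); apply: val_inj; rewrite /= Hd.
Qed.

Lemma embC_sum (V : nmodType) i (f : 'I_(b i) -> V) :
  \sum_(k < bC i) f (embC k) = \sum_(j < b i | PC i j) f j.
Proof. apply: sum_inj; [exact: embC_inj|exact: embC_P|exact: embC_surj]. Qed.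

Definition EC i : 'M[R]_(b i.+1, b i) := \matrix_(k, j)
  (D i k j - (i == i0)%:R * (natent (D i) k q * v * natent (D i) p j)).
Definition dC i : 'M[R]_(bC i.+1, bC i) := \matrix_(k, j) EC i (embC k) (embC j).
Definition FC : free_res M := @FreeRes R M bC dC (fun k => fr_g F (embC k)).
Definition AC i : 'M[R]_(bC i, b i) := \matrix_(k, j)
  ((embC k == j)%:R - ((i == i0.+1) && (val j == p))%:R * (natent (D i.-1) (embC k) q * v)).
Definition BC i : 'M[R]_(b i, bC i) := \matrix_(j, k)
  ((j == embC k)%:R - ((i == i0) && (val j == q))%:R * (v * natent (D i) p (embC k))).


Lemma embC_ne i k : dl i -> (val (@embC i k) == sk i) = false.
Proof. move=> Hd; have := embC_P k; by rewrite /PC Hd /= => /negbTE. Qed.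

Lemma dl_i0 : dl i0. Proof. by rewrite /dl eqxx. Qed.
Lemma dl_i1 : dl i0.+1. Proof. by rewrite /dl eqxx orbT. Qed.
Lemma sk_i0 : sk i0 = q. Proof. by rewrite /sk eqxx. Qed.
Lemma sk_i1 : sk i0.+1 = p. Proof. by rewrite /sk ifN // neq_ltn ltnSn orbT. Qed.

Lemma embC_ne1 k : (val (@embC i0.+1 k) == p) = false.
Proof. by rewrite -sk_i1 embC_ne // dl_i1. Qed.
Lemma embC_ne0 k : (val (@embC i0 k) == q) = false.
Proof. by rewrite -sk_i0 embC_ne // dl_i0. Qed.

Lemma AB i : AC i *m BC i = 1%:M.
Proof.
apply/matrixP => k k'; rewrite !mxE.
under eq_bigr do rewrite !mxE mulrBl.
rewrite sumrB sum_pickl (inj_eq (@embC_inj i)).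
case: (eqVneq i i0.+1) => [Ei|Ni] /=.
- subst i.
  rewrite (gtn_eqF (ltnSn i0)) /= mul0r subr0 big1 ?subr0 // => j _.
  case: (eqVneq j (embC k')) => [->|ne]; first by rewrite embC_ne1 mul0r mul0r.
  by rewrite subr0 mulr0.
- rewrite big1 ?subr0; last by move=> j _; rewrite mul0r mul0r.
  case: (eqVneq i i0) => [Ei|Ni0] /=; last by rewrite mul0r subr0.
  subst i; by rewrite embC_ne0 mul0r subr0.
Qed.

Hypothesis HF : is_free_res F.

Lemma DD i : D i.+1 *m D i = 0.
Proof.
apply/row_matrixP => r; rewrite row_mul row0 rowE.
apply/(HF.2.2 i); by exists (delta_mx 0 r).
Qed.

Lemma DDnatR i (r : 'I_(b i.+2)) c0 :
  \sum_(j < b i.+1) D i.+1 r j * natent (D i) j c0 = 0.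
Proof.
under eq_bigr do rewrite natentR mulr_sumr.
rewrite exchange_big big1 // => c _.
rewrite (eq_bigr (fun j => (val c == c0)%:R * (D i.+1 r j * D i j c))).
  rewrite -mulr_sumr.
  have := congr1 (fun A : 'M_(_, _) => A r c) (DD i); rewrite !mxE => ->.
  by rewrite mulr0.
by move=> j _; ring.
Qed.

Lemma DDnatL i p0 (c : 'I_(b i)) :
  \sum_(j < b i.+1) natent (D i.+1) p0 j * D i j c = 0.
Proof.
under eq_bigr do rewrite natentL mulr_suml.
rewrite exchange_big big1 // => k _.
rewrite (eq_bigr (fun j => (val k == p0)%:R * (D i.+1 k j * D i j c))).
  rewrite -mulr_sumr.
  have := congr1 (fun A : 'M_(_, _) => A k c) (DD i); rewrite !mxE => ->.
  by rewrite mulr0.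
by move=> j _; ring.
Qed.

Lemma epsnat p0 : \sum_(j < b 0) natent (D 0) p0 j *: fr_g F j = 0.
Proof.
under eq_bigr do rewrite natentL scaler_suml.
rewrite exchange_big big1 // => k _.
rewrite (eq_bigr (fun j => (val k == p0)%:R *: (D 0 k j *: fr_g F j))).
  rewrite -scaler_sumr.
  have := (HF.2.1 (delta_mx 0 k *m D 0)).2; rewrite /fr_eps -rowE.
  under eq_bigr do rewrite mxE.
  move=> ->; first by rewrite scaler0.
  by exists (delta_mx 0 k); rewrite rowE.
by move=> j _; rewrite scalerA.
Qed.

Lemma AD i : AC i.+1 *m D i = dC i *m AC i.
Proof.
apply/matrixP => k j; rewrite !mxE.
under eq_bigr do rewrite !mxE mulrBl.
rewrite sumrB sum_pickl.
have -> : \sum_(l < bC i) dC i k l * AC i l j =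
  \sum_(j' < b i | PC i j') EC i (embC k) j' *
     ((j' == j)%:R - ((i == i0.+1) && (val j == p))%:R * (natent (D i.-1) j' q * v)).
  by rewrite -embC_sum; apply: eq_bigr => l _; rewrite !mxE.
rewrite eqSS.
case: (eqVneq i i0) => [Ei|Ni].
- subst i; rewrite (ltn_eqF (ltnSn i0)) /=.
  under [in RHS]eq_bigr do rewrite mul0r subr0.
  rewrite sum_pick !mxE eqxx mul1r.
  have -> : \sum_(l < b i0.+1) (val l == p)%:R * (natent (D i0) (embC k) q * v) * D i0 l j
     = natent (D i0) (embC k) q * v * natent (D i0) p j.
    rewrite natentL mulr_sumr; apply: eq_bigr => l _; ring.
  rewrite /PC dl_i0 sk_i0 /=.
  case: (eqVneq (val j) q) => [Hj|Hj] /=; last by rewrite mul1r.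
  rewrite mul0r -Hj (_ : natent (D i0) _ (val j) = D i0 (embC k) j); last exact: (natentE (D i0) (embC k) j).
  have hv' := hv; rewrite -Hj in hv'; rewrite -mulrA hv' mulr1 subrr //.
- rewrite big1; last by move=> l _; rewrite /= mul0r mul0r.
  rewrite subr0.
  case: (eqVneq i i0.+1) => [Ei|Ni1].
  + subst i => /=.
    under [in RHS]eq_bigr do rewrite !mxE (gtn_eqF (ltnSn i0)) mul0r subr0.
    case: (eqVneq (val j) p) => [Hj|Hj] /=; last first.
      under [in RHS]eq_bigr do rewrite mul0r subr0.
      by rewrite sum_pick /PC dl_i1 sk_i1 Hj mul1r.
    under [in RHS]eq_bigr do rewrite mul1r mulrBr.
    rewrite sumrB sum_pick /PC dl_i1 sk_i1 Hj eqxx /= mul0r sub0r.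
    have H0 := @DDnatR i0 (embC k) q.
    rewrite (bigID (fun j' : 'I_(b i0.+1) => val j' == p)) /= in H0.
    rewrite (big_pred1 j) in H0; last by move=> j'; rewrite /= -Hj (inj_eq val_inj).
    have -> : \sum_(i < b i0.+1 | ~~ (val i == p)) D i0.+1 (embC k) i * (natent (D i0) i q * v)
       = (\sum_(i < b i0.+1 | ~~ (val i == p)) D i0.+1 (embC k) i * natent (D i0) i q) * v.
      rewrite mulr_suml; apply: eq_bigr => l _; ring.
    move/eqP: H0; rewrite addrC addr_eq0 => /eqP ->.
    have hv' := hv; rewrite -Hj in hv'.
    by rewrite mulNr opprK -mulrA [natent _ _ _ * v]mulrC hv' mulr1.
  + under [in RHS]eq_bigr do rewrite !mxE (negbTE Ni) /= !mul0r !subr0.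
    by rewrite sum_pick /PC /dl (negbTE Ni) (negbTE Ni1) /= mul1r.
Qed.

Lemma sum_pickL (n : nat) (P : pred 'I_n) (j : 'I_n) (g : 'I_n -> R) :
  \sum_(j' < n | P j') (j == j')%:R * g j' = (P j)%:R * g j.
Proof.
rewrite -sum_pick; apply: eq_bigr => j' _; by rewrite eq_sym mulrC.
Qed.

Lemma DB i : D i *m BC i = BC i.+1 *m dC i.
Proof.
apply/matrixP => l k; rewrite !mxE.
under eq_bigr do rewrite !mxE mulrBr.
rewrite sumrB sum_pickr.
have -> : \sum_(k' < bC i.+1) BC i.+1 l k' * dC i k' k =
  \sum_(j' < b i.+1 | PC i.+1 j')
     ((l == j')%:R - ((i.+1 == i0) && (val l == q))%:R * (v * natent (D i.+1) p j')) *
     EC i j' (embC k).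
  by rewrite -embC_sum; apply: eq_bigr => k' _; rewrite !mxE.
have -> : \sum_(j < b i) D i l j * (((i == i0) && (val j == q))%:R * (v * natent (D i) p (embC k)))
   = (i == i0)%:R * natent (D i) l q * (v * natent (D i) p (embC k)).
  move: (v * natent (D i) p (embC k)) => w.
  rewrite natentR big_distrr big_distrl; apply: eq_bigr => j _.
  rewrite -mulnb natrM /=; ring.
case: (eqVneq i i0) => [Ei|Ni].
- subst i; rewrite (gtn_eqF (ltnSn i0)) /=.
  under [in RHS]eq_bigr do rewrite mul0r subr0.
  rewrite sum_pickL !mxE eqxx /PC dl_i1 sk_i1 /=.
  case: (eqVneq (val l) p) => [Hl|Hl]; last by rewrite /= !mul1r mulrA.
  rewrite mul0r -Hl (_ : natent (D i0) (val l) _ = D i0 l (embC k)); last exact: (natentE (D i0) l (embC k)).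
  have hv' := hv; rewrite -Hl in hv'.
  by rewrite mul1r mulrA [natent _ _ _ * v]mulrC hv' mul1r subrr.
- rewrite mul0r mul0r subr0.
  case: (eqVneq i.+1 i0) => [Ei|Ni1].
  + have hv' := hv; rewrite -Ei in hv'.
    have Hd : dl i.+1 by rewrite /dl Ei eqxx.
    have Hs : sk i.+1 = q by rewrite /sk Ei eqxx.
    under [in RHS]eq_bigr do rewrite !mxE (negbTE Ni) /= mul0r subr0.
    case: (eqVneq (val l) q) => [Hl|Hl] /=; last first.
      under eq_bigr do rewrite mul0r subr0.
      by rewrite sum_pickL /PC Hd Hs (negbTE Hl) mul1r.
    under eq_bigr do rewrite mul1r mulrBl.
    rewrite sumrB sum_pickL /PC Hd Hs Hl eqxx /= mul0r sub0r.
    have H0 := @DDnatL i p (embC k).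
    rewrite (bigID (fun j' : 'I_(b i.+1) => val j' == q)) /= in H0.
    rewrite (big_pred1 l) in H0; last by move=> j'; rewrite /= -Hl (inj_eq val_inj).
    have -> : \sum_(j' < b i.+1 | ~~ (val j' == q)) v * natent (D i.+1) p j' * D i j' (embC k)
       = v * \sum_(j' < b i.+1 | ~~ (val j' == q)) natent (D i.+1) p j' * D i j' (embC k).
      rewrite [RHS]big_distrr /=; apply: eq_bigr => j' _; ring.
    move/eqP: H0; rewrite addrC addr_eq0 => /eqP ->.
    rewrite -Hl in hv'.
    by rewrite mulrN opprK mulrA hv' mul1r.
  + under [in RHS]eq_bigr do rewrite !mxE (negbTE Ni) /= !mul0r !subr0.
    rewrite sum_pickL /PC /dl (negbTE Ni1) /=.
    by rewrite (_ : (i.+1 == i0.+1) = false) ?mul1r //; rewrite eqSS (negbTE Ni).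
Qed.

Lemma sum_pickM (n : nat) (j0 : 'I_n) (f : 'I_n -> M) :
  \sum_(j < n) (j0 == j)%:R *: f j = f j0.
Proof.
rewrite (bigD1 j0) //= eqxx scale1r big1 ?addr0 // => j /negbTE.
by rewrite eq_sym => ->; rewrite scale0r.
Qed.

Lemma eps1 x : fr_eps FC x = fr_eps F (x *m AC 0).
Proof.
rewrite /fr_eps /=.
under [RHS]eq_bigr do rewrite !mxE scaler_suml.
rewrite exchange_big; apply: eq_bigr => k _.
under eq_bigr do rewrite !mxE /= mul0r subr0 -scalerA.
by rewrite -scaler_sumr sum_pickM.
Qed.

Lemma eps2 x : fr_eps F x = fr_eps FC (x *m BC 0).
Proof.
rewrite /fr_eps /=.
have E : forall k : 'I_(bC 0), (x *m BC 0) 0 k =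
   x 0 (embC k) - (0 == i0)%:R * (\sum_(j < b 0) (val j == q)%:R * x 0 j) * (v * natent (D 0) p (embC k)).
  move=> k; rewrite !mxE.
  under eq_bigr do rewrite !mxE mulrBr.
  rewrite sumrB sum_pickr; congr (_ - _).
  move: (v * natent (D 0) p (embC k)) => w.
  rewrite big_distrr big_distrl /=; apply: eq_bigr => j _; rewrite -mulnb natrM; ring.
under [RHS]eq_bigr do rewrite E.
rewrite (embC_sum (fun j => (x 0 j - (0 == i0)%:R * (\sum_(j0 < b 0) (val j0 == q)%:R * x 0 j0) *
      (v * natent (D 0) p j)) *: fr_g F j)).
case: (eqVneq 0%N i0) => [Ei|Ni].
- have hq' : (q < b 0)%N by rewrite Ei.
  pose qO := Ordinal hq'.
  have Xq : \sum_(j0 < b 0) (val j0 == q)%:R * x 0 j0 = x 0 qO.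
    rewrite -(sum_pickl qO); apply: eq_bigr => j _.
    by rewrite eq_sym -(inj_eq val_inj).
  have hv' : v * natent (D 0) p q = 1 by rewrite Ei.
  have ep := epsnat p.
  rewrite Xq /= mul1r [RHS](eq_bigl (fun j => j != qO)); last first.
    move=> j; rewrite /PC /dl /sk -Ei /=.
    by rewrite -(inj_eq val_inj).
  under [RHS]eq_bigr do rewrite scalerBl -scalerA.
  rewrite sumrB -scaler_sumr.
  rewrite (bigD1 qO) //= in ep.
  move/eqP: ep; rewrite addrC addr_eq0 => /eqP Hs.
  have -> : \sum_(i < b 0 | i != qO) (v * natent (D 0) p i) *: fr_g F i =
     v *: \sum_(i < b 0 | i != qO) natent (D 0) p i *: fr_g F i.
    by rewrite scaler_sumr; apply: eq_bigr => i _; rewrite scalerA.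
  rewrite Hs (bigD1 qO) //= !scalerN opprK !scalerA.
  by rewrite -mulrA hv' mulr1 addrC.
- under [RHS]eq_bigr do rewrite /= !mul0r subr0.
  rewrite [RHS](eq_bigl predT) // => j; rewrite /PC /dl /=; move: Ni; by case: i0.
Qed.

Lemma FC_res : is_free_res FC.
Proof. exact: (@transfer R M F FC AC BC HF AB AD DB eps1 eps2). Qed.

Lemma bC_t t : dl t -> fr_b FC t = (fr_b F t).-1.
Proof. by rewrite /= /bC => ->; rewrite subn1. Qed.

End Cancel.

Section Pairs.
Variables (R : comNzRingType) (M : lmodType R) (m : R -> Prop).
Hypothesis Hloc : local_max_ideal m.

Lemma m_id : Defs.is_ideal m. Proof. by case: Hloc => [[]]. Qed.

Lemma m_sum n (f : 'I_n -> R) : (forall i, m (f i)) -> m (\sum_(i < n) f i).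
Proof.
move=> H; have [H0 [Hadd _]] := m_id.
by apply: big_ind => //; move=> x y; apply: Hadd.
Qed.

Lemma m_mul x y : m y -> m (x * y).
Proof. have [_ [_ Hm]] := m_id; exact: Hm. Qed.

Lemma m_mulr x y : m x -> m (x * y).
Proof. rewrite mulrC; exact: m_mul. Qed.

Lemma rowm n k (x : 'rV[R]_n) (Y : 'M[R]_(n, k)) :
  (forall j, m (x 0 j)) -> forall j, m ((x *m Y) 0 j).
Proof. move=> H j; rewrite mxE; apply: m_sum => i; exact: m_mulr. Qed.

Lemma colm n k (Y : 'M[R]_(k, n)) (c : 'cV[R]_n) :
  (forall i, m (c i 0)) -> forall i, m ((Y *m c) i 0).
Proof. move=> H j; rewrite mxE; apply: m_sum => i; exact: m_mul. Qed.

Lemma local_unit x : ~ m x -> exists v, v * x = 1.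
Proof.
move=> Hx; apply: NNPP => Hn; apply: Hx.
pose I := fun y : R => exists r, y = r * x.
have HI : Defs.proper_ideal I.
  split; [split; [|split]|].
  - by exists 0; rewrite mul0r.
  - by move=> a b [r ->] [r' ->]; exists (r + r'); rewrite mulrDl.
  - by move=> r a [r' ->]; exists (r * r'); rewrite mulrA.
  - by move=> [r Hr]; apply: Hn; exists r.
apply: (Hloc.2 I HI); by exists 1; rewrite mul1r.
Qed.

Definition pairP (F : free_res M) (s : nat) : Prop :=
  exists (x : 'rV[R]_(fr_b F s.+1)) (c : 'cV[R]_(fr_b F s.+1)),
   (forall j, m ((x *m fr_d F s) 0 j)) /\ (forall k, m ((fr_d F s.+1 *m c) k 0)) /\
   (x *m c) 0 0 = 1.

Lemma pair_transfer (F F' : free_res M) s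
  (A : 'M[R]_(fr_b F' s.+1, fr_b F s.+1)) (B : 'M[R]_(fr_b F s.+1, fr_b F' s.+1))
  (A0 : 'M[R]_(fr_b F' s, fr_b F s)) (B2 : 'M[R]_(fr_b F s.+2, fr_b F' s.+2)) :
  A *m B = 1%:M -> A *m fr_d F s = fr_d F' s *m A0 ->
  fr_d F s.+1 *m B = B2 *m fr_d F' s.+1 -> pairP F' s -> pairP F s.
Proof.
move=> HAB HA HB [x [c [Hx [Hc H1]]]].
exists (x *m A), (B *m c); split; [|split].
- rewrite -mulmxA HA mulmxA; exact: rowm.
- rewrite mulmxA HB -mulmxA; exact: colm.
- by rewrite mulmxA -(mulmxA x) HAB mulmx1.
Qed.

End Pairs.

Section Dagger.
Variables (R : comNzRingType) (M : lmodType R) (m : R -> Prop).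
Hypothesis Hloc : local_max_ideal m.

Lemma dagger s : forall n (F : free_res M), is_free_res F -> fr_b F s.+1 = n ->
  pairP m F s \/ pd_lt M s.+1.
Proof.
elim=> [|n IH] F HF Hn.
  right; have [H1 H2] := FT_res (ltn0Sn s) Hn HF.
  by exists (FT F s.+1).
case: (classic (exists (k : 'I_(fr_b F s.+1)) (j : 'I_(fr_b F s)), ~ m (fr_d F s k j))).
  move=> [k [j Hkj]]; have [v Hv] := local_unit Hloc Hkj.
  have hv : v * natent (fr_d F s) k j = 1 by rewrite natentE.
  have HF' := FC_res (ltn_ord k) (ltn_ord j) hv HF.
  have Hb : fr_b (FC v (ltn_ord k) (ltn_ord j)) s.+1 = n.
    by rewrite bC_t ?Hn // /dl eqxx orbT.
  case: (IH _ HF' Hb) => [Hp|]; last by right.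
  left; apply: (pair_transfer Hloc (F' := FC v (ltn_ord k) (ltn_ord j)) (AB v (ltn_ord k) (ltn_ord j) s.+1) (AD (ltn_ord k) (ltn_ord j) hv HF s) (DB (ltn_ord k) (ltn_ord j) hv HF s.+1) Hp).
case: (classic (exists (l : 'I_(fr_b F s.+2)) (k : 'I_(fr_b F s.+1)), ~ m (fr_d F s.+1 l k))).
  move=> [k [j Hkj]] _; have [v Hv] := local_unit Hloc Hkj.
  have hv : v * natent (fr_d F s.+1) k j = 1 by rewrite natentE.
  have HF' := FC_res (ltn_ord k) (ltn_ord j) hv HF.
  have Hb : fr_b (FC v (ltn_ord k) (ltn_ord j)) s.+1 = n.
    by rewrite bC_t ?Hn // /dl eqxx.
  case: (IH _ HF' Hb) => [Hp|]; last by right.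
  left; apply: (pair_transfer Hloc (F' := FC v (ltn_ord k) (ltn_ord j)) (AB v (ltn_ord k) (ltn_ord j) s.+1) (AD (ltn_ord k) (ltn_ord j) hv HF s) (DB (ltn_ord k) (ltn_ord j) hv HF s.+1) Hp).
move=> H2 H1; left.
have lt : (0 < fr_b F s.+1)%N by rewrite Hn.
pose k0 : 'I_(fr_b F s.+1) := Ordinal lt.
exists (delta_mx 0 k0), (delta_mx k0 0); split; [|split].
- move=> j; rewrite -rowE mxE; apply: NNPP => Hm; apply: H1; by exists k0, j.
- move=> k; rewrite -colE mxE; apply: NNPP => Hm; apply: H2; by exists k, k0.
- by rewrite mul_delta_mx mxE !eqxx.
Qed.
End Dagger.

Section Mods.
Variables (R : comNzRingType) (m : R -> Prop) (X : lmodType R) (N : X -> Prop).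
Hypothesis Hloc : local_max_ideal m.
Hypothesis HN : submodule N.
Local Notation mN := (ideal_mul m N).

Lemma N_scale r y : N y -> N (r *: y).
Proof. by case: HN => [_ [_ H]]; apply: H. Qed.
Lemma N_add y y' : N y -> N y' -> N (y + y').
Proof. by case: HN => [_ [H _]]; apply: H. Qed.
Lemma N_sub y y' : N y -> N y' -> N (y - y').
Proof. move=> H H'; apply: N_add => //; rewrite -scaleN1r; exact: N_scale. Qed.

Lemma mN_def n (r : 'I_n -> R) (x : 'I_n -> X) :
  (forall i, m (r i)) -> (forall i, N (x i)) -> mN (\sum_(i < n) r i *: x i).
Proof. move=> Hr Hx; exists n, r, x; split => //. Qed.

Lemma mN_sub y y' : mN y -> mN y' -> mN (y - y').
Proof.
move=> [n [r [x [H ->]]]] [n' [r' [x' [H' ->]]]].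
exists (n + n')%N.
exists (fun i => match split i with inl i1 => r i1 | inr i2 => - r' i2 end).
exists (fun i => match split i with inl i1 => x i1 | inr i2 => x' i2 end).
split.
  move=> i; case: (split i) => [i1|i2]; first exact: H.
  split; last exact: (H' i2).2.
  have [_ [_ Hm]] := m_id Hloc; rewrite -mulN1r; apply: Hm; exact: (H' i2).1.
have sl : forall i : 'I_n, split (lshift n' i) = inl i := fun i => unsplitK (inl i).
have sr : forall i : 'I_n', split (rshift n i) = inr i := fun i => unsplitK (inr i).
rewrite big_split_ord /=.
rewrite -sumrN; congr (_ + _); first by apply: eq_bigr => i _; rewrite sl.
apply: eq_bigr => i _; by rewrite sr scaleNr.
Qed.

Lemma mN0 : mN 0.
Proof. exists 0%N, (fun _ => 0), (fun _ => 0); split; [by case|by rewrite big_ord0]. Qed.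

Lemma mN_add y y' : mN y -> mN y' -> mN (y + y').
Proof.
move=> H H'; have -> : y + y' = y - (0 - y') by rewrite sub0r opprK.
apply: mN_sub => //; apply: mN_sub => //; exact: mN0.
Qed.

Lemma mN_sum n (f : 'I_n -> X) : (forall i, mN (f i)) -> mN (\sum_(i < n) f i).
Proof. move=> H; apply: big_ind => //; [exact: mN0|exact: mN_add]. Qed.

Lemma burch_wit : burch m N ->
  exists a z, m a /\ colon N m z /\ ~ mN (a *: z).
Proof.
move=> Hb; apply: NNPP => Hn; apply: Hb => y; split; last first.
  move=> [n [r [x [H ->]]]]; exists n, r, x; split => // i; split; first exact: (H i).1.
  move=> r' _; apply: N_scale; exact: (H i).2.
move=> [n [r [x [H ->]]]]; apply: mN_sum => i.
apply: NNPP => Hi; apply: Hn; exists (r i), (x i); split; [exact: (H i).1|split => //].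
exact: (H i).2.
Qed.

End Mods.

Section Contra.
Variables (R : comNzRingType) (m : R -> Prop) (X : lmodType R) (N : X -> Prop).
Variables (M : lmodType R) (F : free_res M).
Hypothesis Hloc : local_max_ideal m.
Hypothesis HN : submodule N.
Hypothesis HF : is_free_res F.
Local Notation mN := (ideal_mul m N).
Local Notation D := (fr_d F).
Local Notation b := (fr_b F).

Lemma DDv i (y : 'rV[R]_(b i.+2)) : y *m D i.+1 *m D i = 0.
Proof. apply/(HF.2.2 i); by exists y. Qed.

Lemma DDm i : D i.+1 *m D i = 0.
Proof.
apply/row_matrixP => r; rewrite row_mul row0 rowE; exact: DDv.
Qed.

Lemma cyc_bd s (y : 'rV[R]_(b s.+1)) (z : X) :
  tor_cycle F s (fun j => (y *m D s) 0 j *: z).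
Proof.
case: s y => [|s] y //= j; rewrite /tor_map.
under eq_bigr do rewrite scalerA.
rewrite -scaler_suml.
transitivity (((y *m D s.+1 *m D s) 0 j) *: z); last by rewrite DDv mxE scale0r.
rewrite [in RHS]mxE; congr (_ *: _); apply: eq_bigr => k _; by rewrite mulrC.
Qed.

Lemma m_in a z r : m a -> colon N m z -> N ((r * a) *: z).
Proof. move=> Ha Hz; apply: Hz; exact: m_mul. Qed.

Lemma tor_contra s a z : m a -> colon N m z -> pairP m F s ->
  tor_zero F N s.+1 -> tor_zero F N s -> mN (a *: z).
Proof.
move=> Ha Hz [x [c [Hx [Hc H1]]]] T1 T0.
pose v := fun j => (x *m D s) 0 j *: z.
have [u [Hu Hvu]] := T0 v (fun j => Hz _ (Hx j)) (cyc_bd x z).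
pose w := fun l => a *: u l - (x 0 l * a) *: z.
have Hw : inN N w.
  move=> l; apply: N_sub => //; [exact: N_scale|exact: m_in].
have Cw : tor_cycle F s.+1 w.
  move=> j /=; rewrite /tor_map.
  under eq_bigr do rewrite scalerBr !scalerA.
  rewrite sumrB -!scaler_suml.
  have -> : \sum_(i < b s.+1) D s i j * a *: u i = a *: tor_map (D s) u j.
    rewrite /tor_map scaler_sumr; apply: eq_bigr => i _; by rewrite scalerA mulrC.
  rewrite -Hvu /v scalerA mxE.
  apply/eqP; rewrite subr_eq0; apply/eqP; congr (_ *: _).
  rewrite big_distrr /=; apply: eq_bigr => i _; ring.
have [u' [Hu' Hwu]] := T1 w Hw Cw.
have E : a *: z = \sum_(l < b s.+1) (c l 0 * a) *: u l - \sum_(l < b s.+1) c l 0 *: w l.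
  rewrite /w.
  under [X in _ - X]eq_bigr do rewrite scalerBr !scalerA.
  rewrite sumrB opprB addrA.
  rewrite addrAC subrr add0r -scaler_suml; congr (_ *: _).
  move: H1; rewrite mxE => H1.
  rewrite -[LHS]mul1r -H1 big_distrl /=; apply: eq_bigr => i _; ring.
rewrite E; apply: mN_sub => //.
  apply: mN_def => l //; exact: m_mul.
have -> : \sum_(l < b s.+1) c l 0 *: w l =
   \sum_(l' < b s.+2) (D s.+1 *m c) l' 0 *: u' l'.
  under eq_bigr do rewrite Hwu /tor_map scaler_sumr.
  rewrite exchange_big; apply: eq_bigr => l' _.
  rewrite mxE scaler_suml; apply: eq_bigr => l _; by rewrite scalerA mulrC.
apply: mN_def => //; exact: Hc.
Qed.

Lemma ext_contra s a z : m a -> colon N m z -> pairP m F s ->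
  ext_zero F N s.+2 -> ext_zero F N s.+1 -> mN (a *: z).
Proof.
move=> Ha Hz [x [c [Hx [Hc H1]]]] E2 E1.
pose w := fun k => (D s.+1 *m c) k 0 *: z.
have Cw : forall l, hom_map (D s.+2) w l = 0.
  move=> l; rewrite /hom_map /w.
  under eq_bigr do rewrite scalerA.
  rewrite -scaler_suml.
  transitivity (((D s.+2 *m (D s.+1 *m c)) l 0) *: z); last by rewrite mulmxA DDm mul0mx mxE scale0r.
  by rewrite [in RHS]mxE.
have [u [Hu Hwu]] := E2 w (fun k => Hz _ (Hc k)) Cw.
pose y := fun j => a *: u j - (c j 0 * a) *: z.
have Hy : inN N y.
  move=> l; apply: N_sub => //; [exact: N_scale|exact: m_in].
have Cy : forall k, hom_map (D s.+1) y k = 0.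
  move=> k; rewrite /hom_map /y.
  under eq_bigr do rewrite scalerBr !scalerA.
  rewrite sumrB -!scaler_suml.
  have -> : \sum_(i < b s.+1) D s.+1 k i * a *: u i = a *: hom_map (D s.+1) u k.
    rewrite /hom_map scaler_sumr; apply: eq_bigr => i _; by rewrite scalerA mulrC.
  rewrite -Hwu /w scalerA mxE.
  apply/eqP; rewrite subr_eq0; apply/eqP; congr (_ *: _).
  rewrite big_distrr /=; apply: eq_bigr => i _; ring.
have [u' [Hu' Hyu]] := E1 y Hy Cy.
have E : a *: z = \sum_(l < b s.+1) (x 0 l * a) *: u l - \sum_(l < b s.+1) x 0 l *: y l.
  rewrite /y.
  under [X in _ - X]eq_bigr do rewrite scalerBr !scalerA.
  rewrite sumrB opprB addrA.
  rewrite addrAC subrr add0r -scaler_suml; congr (_ *: _).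
  move: H1; rewrite mxE => H1.
  rewrite -[LHS]mul1r -H1 big_distrl /=; apply: eq_bigr => i _; ring.
rewrite E; apply: mN_sub => //.
  apply: mN_def => l //; exact: m_mul.
have -> : \sum_(l < b s.+1) x 0 l *: y l =
   \sum_(l' < b s) (x *m D s) 0 l' *: u' l'.
  under eq_bigr do rewrite Hyu /hom_map scaler_sumr.
  rewrite exchange_big; apply: eq_bigr => l' _.
  rewrite mxE scaler_suml; apply: eq_bigr => l _; by rewrite scalerA.
apply: mN_def => //; exact: Hx.
Qed.

End Contra.

Unset Implicit Arguments.
Local Close Scope ring_scope.

Theorem proposition3p16 (R : comNzRingType) (m : R -> Prop)
  (X : lmodType R) (N : X -> Prop) (M : lmodType R) (t : nat)
  (F : free_res M) :
  noetherian R -> local_max_ideal m ->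
  fin_gen X -> submodule N -> burch m N ->
  (1 <= t)%N -> fin_gen M -> is_free_res F ->
  ((tor_zero F N t /\ tor_zero F N t.-1) \/
   (ext_zero F N t.+1 /\ ext_zero F N t)) ->
  pd_lt M t.
Proof.
move=> _ Hloc _ HN Hb Ht _ HF.
case: t Ht => // s _ Hv.
have [a [z [Ha [Hz Hn]]]] := burch_wit Hloc HN Hb.
case: (@dagger _ _ _ Hloc s _ F HF (erefl (fr_b F s.+1))) => [Hp|//].
exfalso; apply: Hn.
case: Hv => [[T1 T0]|[E2 E1]].
- exact: (tor_contra Hloc HN HF Ha Hz Hp T1 T0).
- exact: (ext_contra Hloc HN HF Ha Hz Hp E2 E1).
Qed.
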